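(* Fix any sufficiently small $\varepsilon > 0$ and integers $m = m(n)\ge \varepsilon n$, $\ell = \ell(n)\in [\varepsilon m, m]$ and $k = k(n)$ with $k+m\le n$. Let $G = (U,V,F)$ be a bipartite graph with parts $U,V\subseteq V_n$ and edge set $F$, where $|U| = k$, $|V| = m$, and every $u\in U$ has $\deg_G(u)\ge \ell$. Let $T$ be a uniformly random spanning tree of $K_n$. Then there is a constant $c = c(\varepsilon) > 0$ such that $$\Pr(F\cap E(T) = \emptyset)\le \exp(-ck).$$
   Context: $K_n$ is the complete graph on vertex set $V_n=\{v_1,\dots,v_n\}$. *)

(* Defs.v *)
From Stdlib Require Import Reals.
From mathcomp Require Import all_boot.
From mathcomp Require Import boolp.

Set Implicit Arguments.
Unset Strict Implicit.
Unset Printing Implicit Defensive.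

(* Vertex set V_n = 'I_n; an edge is a 2-element subset of V_n. *)
Definition Kn_edges (n : nat) : {set {set 'I_n}} := [set e : {set 'I_n} | #|e| == 2].

Definition tadj (n : nat) (T : {set {set 'I_n}}) : rel 'I_n :=
  fun x y => (x != y) && ([set x; y] \in T).

Definition graph_connected (n : nat) (T : {set {set 'I_n}}) : bool :=
  [forall x, forall y, connect (tadj T) x y].

Definition acyclic (n : nat) (T : {set {set 'I_n}}) : Prop :=
  forall s : seq 'I_n, uniq s -> 2 < size s -> ~~ cycle (tadj T) s.

Definition is_spanning_tree (n : nat) (T : {set {set 'I_n}}) : bool :=
  [&& T \subset Kn_edges n, graph_connected T & `[< acyclic T >]].

Definition spanning_trees (n : nat) : {set {set {set 'I_n}}} :=
  [set T | is_spanning_tree T].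

Definition prob_avoid (n : nat) (F : {set {set 'I_n}}) : R :=
  Rdiv (INR #|[set T in spanning_trees n | [disjoint F & T]]|)
       (INR #|spanning_trees n|).

Definition bdeg (n : nat) (V : {set 'I_n}) (F : {set {set 'I_n}}) (u : 'I_n) : nat :=
  #|[set v in V | [set u; v] \in F]|.

(* Main.v *)
Require Import Defs.
From Stdlib Require Import Reals.
From mathcomp Require Import all_boot.
From Stdlib Require Import Lra Psatz.
From mathcomp Require Import boolp.
Set Implicit Arguments.
Unset Strict Implicit.
Unset Printing Implicit Defensive.

Section G.
Variable n : nat.
Implicit Types (T X : {set {set 'I_n}}) (u v w x y : 'I_n).

Lemma tadj_sym T : symmetric (tadj T).
Proof. by move=> x y; rewrite /tadj eq_sym setUC. Qed.

Lemma tadj_sub T1 T2 : T1 \subset T2 -> subrel (tadj T1) (tadj T2).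
Proof. by move=> sT x y /andP[xy H]; rewrite /tadj xy (subsetP sT _ H). Qed.

Lemma set2_eq u a b : u != b -> [set u; a] = [set u; b] -> a = b.
Proof.
move=> ub E; have : b \in [set u; a] by rewrite E !inE eqxx orbT.
by rewrite !inE eq_sym (negbTE ub) /= => /eqP.
Qed.

Lemma no_bypass T x y : acyclic T -> x != y -> [set x; y] \in T ->
  ~~ connect (tadj (T :\ [set x; y])) x y.
Proof.
move=> acT xy xyT; apply/negP => /connectP[p pP ylast].
case: (shortenP pP) ylast => p' p'P up' _ ylast.
case: p' p'P up' ylast => [|z [|z2 p'']].
- by move=> _ _ /= yx; move: xy; rewrite yx eqxx.
- move=> /andP[H _] _ /= yz; move: H; by rewrite -yz /tadj !inE eqxx andbF.
move=> p'P up' ylast.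
have := acT (x :: z :: z2 :: p'') up' isT; apply/negP; apply/negPn.
have H := sub_path (tadj_sub (subsetDl T [set [set x; y]])) p'P.
rewrite /cycle rcons_path H /= -[last _ _]/(last x [:: z, z2 & p'']) -ylast.
by rewrite /tadj eq_sym xy /= setUC xyT.
Qed.

Lemma exists_w T u v : graph_connected T -> u != v ->
  exists w, [&& w != u, [set u; w] \in T & connect (tadj (T :\ [set u; w])) v w].
Proof.
move=> Tc uv.
have /connectP[p pP ul] : connect (tadj T) v u by move/forallP/(_ v)/forallP/(_ u): Tc.
case: (shortenP pP) ul => p' p'P up' _ ul.
case/lastP: p' p'P up' ul => [|q z] p'P up' ul.
  by move: uv; rewrite ul eqxx.
rewrite last_rcons in ul; subst z.
rewrite rcons_path in p'P; case/andP: p'P => qP wu.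
rewrite -rcons_cons rcons_uniq in up'; case/andP: up' => unq _.
exists (last v q); case/andP: (wu) => -> wuT /=; rewrite setUC wuT /=.
apply/connectP; exists q => //.
apply: (@sub_in_path _ [pred a | a != u] (tadj T)) qP; last first.
  by apply/allP => a ain /=; apply: contraNneq unq => <-.
move=> a b; rewrite !inE => au bu /andP[ab abT]; rewrite /tadj ab /= !inE abT andbT.
apply: contraNneq au => E.
have : u \in [set a; b] by rewrite E !inE eqxx orbT.
rewrite !inE eq_sym => /orP[// | ub]; by rewrite (eqP ub) eqxx in bu.
Qed.

Lemma cycle_split (e e' : rel 'I_n) a b s : symmetric e' -> uniq s -> (2 < size s)%N ->
  cycle e s ->
  (forall x y, e x y -> ~~ e' x y -> ((x == a) && (y == b)) || ((x == b) && (y == a))) ->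
  cycle e' s \/ connect e' a b.
Proof.
move=> syme' us ss cs H.
have sub : {in [pred x | x != a] &, subrel e e'}.
  move=> x y; rewrite !inE => xa ya exy; apply/negPn/negP => nxy.
  by case/orP: (H x y exy nxy) => /andP[/eqP xa' /eqP ya']; [move: xa|move: ya]; rewrite ?xa' ?ya' eqxx.
case: (boolP (a \in s)) => [ain | anin]; last first.
  left; apply: (@sub_in_cycle _ [pred x | x != a] e e' sub _ _ cs); apply/allP => x xs; rewrite inE.
  by apply: contraNneq anin => <-.
case: (rot_to ain) => i s' E.
have cs' : cycle e (a :: s') by rewrite -E rot_cycle.
have us' : uniq (a :: s') by rewrite -E rot_uniq.
have ss' : (1 < size s')%N by move: ss; rewrite -(size_rot i) E.
case: s' E cs' us' ss' => [|z [|w r]] // E cs' us' _.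
have [eaz ezw pwr eya] : [/\ e a z, e z w, path e w r & e (last w r) a].
  by move: cs'; rewrite /cycle rcons_path /= => /andP[/and3P[-> -> ->] ->].
set y := last w r in eya *.
have [anin zw] : a \notin z :: w :: r /\ z \notin w :: r.
  by move: us' => /andP[-> /andP[-> _]].
have allP' : all [pred x | x != a] (z :: w :: r).
  by apply/allP => x xs; rewrite inE; apply: contraNneq anin => <-.
have pe' : path e' z (w :: r).
  by apply: (@sub_in_path _ [pred x | x != a] e e' sub _ _ allP'); rewrite /= ezw.
have yin : y \in w :: r by rewrite /y mem_last.
have yz : y != z by apply: contraNneq zw => <-.
have ya : y != a by apply: contraNneq anin => <-; rewrite inE yin orbT.
have lasty : last a [:: z, w & r] = y by [].
case: (boolP (e' a z)) => eaz'; case: (boolP (e' y a)) => eya'.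
- left; rewrite -(rot_cycle i) E /cycle rcons_path lasty eya' andbT /=.
  by rewrite eaz'.
- right; apply/connectP; exists (z :: w :: r); first by rewrite /= eaz'.
  case/orP: (H _ _ eya eya') => /andP[/eqP yb _]; first by move: ya; rewrite yb eqxx.
  by rewrite lasty yb.
- right; rewrite (sym_connect_sym syme').
  case/orP: (H _ _ eaz eaz') => /andP[_ /eqP zb]; last by move: anin; rewrite zb inE eqxx.
  apply/connectP; exists (rcons (w :: r) a); last by rewrite last_rcons.
  by rewrite -zb rcons_path pe' eya'.
- case/orP: (H _ _ eaz eaz') => /andP[_ /eqP zb]; last by move: anin; rewrite zb inE eqxx.
  case/orP: (H _ _ eya eya') => /andP[/eqP yb _]; first by move: ya; rewrite yb eqxx.
  by move: yz; rewrite yb zb eqxx.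
Qed.

Lemma set2_pairs x y a b : x != y -> [set x; y] = [set a; b] ->
  ((x == a) && (y == b)) || ((x == b) && (y == a)).
Proof.
move=> xy E.
have : x \in [set a; b] by rewrite -E !inE eqxx.
have : y \in [set a; b] by rewrite -E !inE eqxx orbT.
rewrite !inE => /orP[] /eqP yab /orP[] /eqP xab; subst;
  rewrite ?eqxx ?orbT //; by rewrite eqxx in xy.
Qed.

Lemma exchange T u v w : is_spanning_tree T -> u != v -> [set u; v] \notin T ->
  w != u -> [set u; w] \in T -> connect (tadj (T :\ [set u; w])) v w ->
  is_spanning_tree ([set u; v] |: (T :\ [set u; w])).
Proof.
case/and3P => Tsub Tc /asboolP Tac uv uvT wu uwT cvw.
set T' := [set u; v] |: (T :\ [set u; w]).
set R := tadj (T :\ [set u; w]).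
have RT' : subrel R (tadj T') by apply: tadj_sub; apply: subsetUr.
have cRT' : subrel (connect R) (connect (tadj T')).
  by apply: connect_sub => x y /RT' /connect1.
have sT' := sym_connect_sym (tadj_sym T').
have cuw : connect (tadj T') u w.
  apply: (connect_trans (y := v)); last by apply: cRT'.
  by apply: connect1; rewrite /tadj uv /T' !inE eqxx.
apply/and3P; split.
- apply/subsetP => e; rewrite /T' !inE => /orP[/eqP -> | /andP[_ eT]].
    by rewrite cards2 uv.
  by move: (subsetP Tsub _ eT); rewrite inE.
- apply/forallP => x; apply/forallP => y.
  have cT : connect (tadj T) x y by move/forallP/(_ x)/forallP/(_ y): Tc.
  apply: (connect_sub _ cT) => a b /andP[ab abT].
  case: (boolP ([set a; b] == [set u; w])) => [/eqP E | ne].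
    case/orP: (set2_pairs ab E) => /andP[/eqP -> /eqP ->] //.
    by rewrite sT'.
  by apply: connect1; rewrite /tadj ab /T' !inE ne abT orbT.
- apply/asboolP => s us ss; apply/negP => cs.
  have H : forall x y, tadj T' x y -> ~~ R x y ->
      ((x == u) && (y == v)) || ((x == v) && (y == u)).
    move=> x y /andP[xy]; rewrite /T' !inE => /orP[/eqP E | H1] nR.
      exact: set2_pairs xy E.
    by move: nR; rewrite /R /tadj xy !inE H1.
  case: (cycle_split (tadj_sym _) us ss cs H) => [cR | cuv].
    have := Tac s us ss; apply/negP/negPn.
    exact: (sub_cycle (tadj_sub (subsetDl T [set [set u; w]])) cR).
  have uw : u != w by rewrite eq_sym.
  by have := no_bypass Tac uw uwT; rewrite (connect_trans cuv cvw).
Qed.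

Definition Aset (X : {set {set 'I_n}}) := [set T in spanning_trees n | [disjoint X & T]].

Definition wgood T u v w :=
  [&& w != u, [set u; w] \in T & connect (tadj (T :\ [set u; w])) v w].

Definition wsel T u v := odflt u [pick w | wgood T u v w].

Lemma wselP T u v : graph_connected T -> u != v -> wgood T u v (wsel T u v).
Proof.
move=> Tc uv; rewrite /wsel; case: pickP => [w //|H].
by case: (exists_w Tc uv) => w; rewrite -/(wgood T u v w) H.
Qed.

Lemma recover T u v w : [set u; v] \notin T -> [set u; w] \in T ->
  T = [set u; w] |: (([set u; v] |: (T :\ [set u; w])) :\ [set u; v]).
Proof.
move=> uvT uwT; apply/setP => e; rewrite !inE.
case: (eqVneq e [set u; w]) => [->|ne]; first by rewrite uwT.
case: (eqVneq e [set u; v]) => [->|ne2] //=; by rewrite (negbTE uvT).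
Qed.

Lemma key X u (N : {set 'I_n}) : u \notin N -> (forall e, e \in X -> u \notin e) ->
  (#|Aset (X :|: [set [set u; v] | v in N])| * (n + #|N|) <= n * #|Aset X|)%N.
Proof.
move=> uN Xu.
set Fu := [set [set u; v] | v in N].
set A1 := Aset (X :|: Fu); set A0 := Aset X.
have A10 : A1 \subset A0.
  apply/subsetP => T; rewrite !inE => /andP[-> d] /=.
  by apply: disjointWl d; apply: subsetUl.
set B := A0 :\: A1.
have cA0 : #|A0| = (#|A1| + #|B|)%N.
  by rewrite -(cardsID A1 A0) (setIidPr A10).
have facts : forall T v, (T, v) \in setX A1 N ->
   [/\ is_spanning_tree T, u != v, (forall v', v' \in N -> [set u; v'] \notin T), v \in N & [disjoint X & T]].
  move=> T v; rewrite !inE => /andP[/andP[sT d] vN].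
  have uv : u != v by apply: contraNneq uN => ->.
  rewrite /= in sT d vN; split => //.
  - move=> v' v'N; rewrite (disjointFr d) //; rewrite !inE; apply/orP; right; apply/imsetP; by exists v'.
  - by apply: disjointWl d; apply: subsetUl.
pose f (p : {set {set 'I_n}} * 'I_n) :=
  let w := wsel p.1 u p.2 in ([set u; p.2] |: (p.1 :\ [set u; w]), w).
have finj : {in setX A1 N &, injective f}.
  case=> T1 v1 [T2 v2] /facts[s1 uv1 n1 v1N _] /facts[s2 uv2 n2 v2N _] [E Ew].
  have Tc1 : graph_connected T1 by case/and3P: s1.
  have Tc2 : graph_connected T2 by case/and3P: s2.
  case/and3P: (wselP Tc1 uv1) => _ uw1 _.
  case/and3P: (wselP Tc2 uv2) => _ uw2 _.
  move: E Ew; rewrite /f /=; set w1 := wsel T1 u v1; set w2 := wsel T2 u v2 => E Ew.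
  rewrite -/w1 -/w2 in uw1 uw2.
  have ev : v1 = v2.
    have : [set u; v1] \in [set u; v2] |: T2 :\ [set u; w2] by rewrite -E !inE eqxx.
    rewrite !inE => /orP[/eqP /(set2_eq uv2) // | /andP[_ H]].
    by rewrite (negbTE (n2 _ v1N)) in H.
  subst v2; rewrite (recover (n1 _ v1N) uw1) (recover (n2 _ v1N) uw2) E Ew.
  done.
have fim : f @: setX A1 N \subset setX B [set: 'I_n].
  apply/subsetP => q /imsetP[[T v] TvD ->].
  have [sT uv nT vN dX] := facts _ _ TvD.
  have Tc : graph_connected T by case/and3P: sT.
  have := wselP Tc uv; rewrite /wgood /f /=; set w := wsel T u v.
  case/and3P => wu uwT cvw.
  have sT' := exchange sT uv (nT v vN) wu uwT cvw.
  rewrite !inE andbT sT' /=; apply/andP; split.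
    apply/negP => d.
    have : [set u; v] \in X :|: Fu by rewrite !inE; apply/orP; right; apply/imsetP; exists v.
    by rewrite (disjointFl d) // !inE eqxx.
  rewrite disjoints_subset; apply/subsetP => e eX; rewrite !inE negb_or.
  apply/andP; split.
    apply: contraNneq (Xu _ eX) => ->; by rewrite !inE eqxx.
  by rewrite (disjointFr dX eX) andbF.
have := subset_leq_card fim; rewrite card_in_imset // !cardsX cardsT card_ord => H.
rewrite cA0 !mulnDr; apply: leq_add; first by rewrite mulnC.
by rewrite [n * _]mulnC.
Qed.

Definition Gs (F : {set {set 'I_n}}) (s : seq 'I_n) := [set e in F | has (fun u => u \in e) s].

Lemma iter_bound (U V : {set 'I_n}) (F : {set {set 'I_n}}) l : [disjoint U & V] ->
  F \subset [set [set u; v] | u in U, v in V] ->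
  (forall u, u \in U -> (l <= bdeg V F u)%N) ->
  forall s, uniq s -> {subset s <= U} ->
  (#|Aset (Gs F s)| * (n + l) ^ (size s) <= n ^ (size s) * #|Aset set0|)%N.
Proof.
move=> dUV FUV degl; elim=> [|u s IH] /=.
  move=> _ _; rewrite !expn0 muln1 mul1n.
  apply: subset_leq_card; apply/subsetP => T; rewrite !inE => /andP[-> _] /=.
  by rewrite disjoints_subset sub0set.
case/andP=> us uniqs sU.
have uU : u \in U by apply: sU; rewrite inE eqxx.
have sU' : {subset s <= U} by move=> x xs; apply: sU; rewrite inE xs orbT.
have Fform : forall e, e \in F -> exists a b, [/\ a \in U, b \in V & e = [set a; b]].
  move=> e /(subsetP FUV) /imset2P[a b aU bV ->]; by exists a, b.
have UnV : forall x, x \in U -> x \in V -> False.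
  by move=> x xU xV; move: (disjointFr dUV xU); rewrite xV.
set N := [set v in V | [set u; v] \in F].
have uN : u \notin N by rewrite inE; apply/negP => /andP[uV _]; exact: (UnV u).
have Xu : forall e, e \in Gs F s -> u \notin e.
  move=> e; rewrite inE => /andP[/Fform[a [b [aU bV ->]]] /hasP[u' u's u'e]].
  have u'U := sU' _ u's.
  move: u'e; rewrite !inE => /orP[/eqP u'a | /eqP u'b]; last by subst; case: (UnV _ u'U bV).
  subst u'.
 apply/negP => /orP[/eqP ua | /eqP ub].
    by subst; rewrite u's in us.
  by subst; case: (UnV _ uU bV).
have GE : Gs F (u :: s) = Gs F s :|: [set [set u; v] | v in N].
  apply/setP => e; rewrite !inE /=; apply/idP/idP.
    case/andP=> eF /orP[ue | hs]; last by rewrite eF hs.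
    apply/orP; right; apply/imsetP.
    case: (Fform _ eF) => a [b [aU bV E]]; subst e.
    move: ue; rewrite !inE => /orP[/eqP ua | /eqP ub]; last by subst; case: (UnV _ uU bV).
    by subst; exists b => //; rewrite inE bV eF.
  case/orP=> [/andP[-> ->] | /imsetP[v]]; first by rewrite orbT.
  by rewrite inE => /andP[_ uvF] ->; rewrite uvF !inE eqxx.
have K := key uN Xu.
have dN : (l <= #|N|)%N by apply: degl.
have IH' := IH uniqs sU'.
rewrite GE expnS mulnA.
apply: (leq_trans (leq_mul (leq_mul (leqnn _) (leq_add (leqnn n) dN)) (leqnn _))).
apply: (leq_trans (leq_mul K (leqnn _))).
by rewrite expnS -mulnA -mulnA leq_mul2l IH' orbT.
Qed.
End G.

Local Open Scope R_scope.
Lemma INR_expn m k : INR (m ^ k)%N = Rpow_def.pow (INR m) k.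
Proof. elim: k => [|k IH] //=. by rewrite expnS -multE mult_INR IH. Qed.

Lemma real_part (a S n l k : nat) (q : R) : (a <= S)%N ->
  (a * (n + l) ^ k <= n ^ k * S)%N -> Rlt 0 q ->
  Rle (Rmult (INR n) q) (Rplus (INR n) (INR l)) -> (k = 0 \/ 0 < n)%N ->
  Rle (Rdiv (INR a) (INR S)) (Rinv (Rpow_def.pow q k)).
Proof.
move=> aS H q0 nq kn.
have qk : Rlt 0 (Rpow_def.pow q k) by apply: pow_lt.
have Hr : Rle (Rmult (INR a) (Rpow_def.pow (INR n + INR l) k)) (Rmult (Rpow_def.pow (INR n) k) (INR S)).
  by move/leP/le_INR: H; rewrite !mult_INR !INR_expn plus_INR.
have key : Rle (Rmult (INR a) (Rpow_def.pow q k)) (INR S).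
  case: kn => [k0 | n0].
    by subst k => /=; rewrite Rmult_1_r; apply: le_INR; apply/leP.
  have n0' : Rlt 0 (INR n) by apply: lt_0_INR; apply/ltP.
  have nk : Rlt 0 (Rpow_def.pow (INR n) k) by apply: pow_lt.
  apply: (Rmult_le_reg_l (Rpow_def.pow (INR n) k)) => //.
  have h1 : Rle (Rpow_def.pow (INR n * q) k) (Rpow_def.pow (INR n + INR l) k).
    apply: pow_incr; split => //; apply: Rmult_le_pos; [lra|lra].
  rewrite Rpow_mult_distr in h1.
  have a0 : Rle 0 (INR a) by apply: pos_INR.
  apply: (Rle_trans _ (INR a * Rpow_def.pow (INR n + INR l) k)); last by lra.
  rewrite -Rmult_assoc (Rmult_comm _ (INR a)) Rmult_assoc.
  by apply: Rmult_le_compat_l.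
case: (posnP S) => [S0 | Spos].
  have a0 : a = 0%N by apply/eqP; rewrite -leqn0 -S0.
  rewrite a0 S0 /= /Rdiv Rmult_0_l; apply: Rlt_le; exact: Rinv_0_lt_compat.
have S0 : Rlt 0 (INR S) by apply: lt_0_INR; apply/ltP.
apply: (Rmult_le_reg_r (Rmult (INR S) (Rpow_def.pow q k))); first exact: Rmult_lt_0_compat.
have -> : Rmult (Rdiv (INR a) (INR S)) (Rmult (INR S) (Rpow_def.pow q k)) = Rmult (INR a) (Rpow_def.pow q k).
  by field; lra.
have -> : Rmult (Rinv (Rpow_def.pow q k)) (Rmult (INR S) (Rpow_def.pow q k)) = INR S.
  by field; lra.
exact: key.
Qed.

Theorem lemma2p10 :
  exists eps0 : R, Rlt 0 eps0 /\
  forall eps : R, Rlt 0 eps -> Rlt eps eps0 ->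
  exists c : R, Rlt 0 c /\
  forall (n m l k : nat) (U V : {set 'I_n}) (F : {set {set 'I_n}}),
    Rle (Rmult eps (INR n)) (INR m) ->
    Rle (Rmult eps (INR m)) (INR l) -> (l <= m)%N ->
    (k + m <= n)%N ->
    [disjoint U & V] ->
    #|U| = k -> #|V| = m ->
    F \subset [set [set u; v] | u in U, v in V] ->
    (forall u, u \in U -> (l <= bdeg V F u)%N) ->
    Rle (prob_avoid F) (exp (Ropp (Rmult c (INR k)))).
Proof.
exists 1; split; first exact: Rlt_0_1.
move=> eps He He1.
have q0 : Rlt 1 (1 + eps * eps) by nra.
exists (ln (1 + eps * eps)); split.
  rewrite -ln_1; apply: ln_increasing => //; lra.
move=> n m l k U V F Hn Hm lm km dUV cU cV FUV deg.
have sub : {subset enum U <= U} by move=> x; rewrite mem_enum.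
have H := iter_bound dUV FUV deg (enum_uniq (pred_of_set U)) sub.
have GE : Gs F (enum U) = F.
  apply/setP => e; rewrite inE; apply/idP/idP => [/andP[] // | eF].
  rewrite eF /=; case/imset2P: (subsetP FUV _ eF) => a b aU bV ->.
  by apply/hasP; exists a; rewrite ?mem_enum ?inE ?eqxx.
have AE : Aset set0 = spanning_trees n.
  by apply/setP => T; rewrite !inE disjoints_subset sub0set andbT.
rewrite GE AE -cardE cU in H.
rewrite /prob_avoid.
change (Rle (Rdiv (INR #|Aset F|) (INR #|spanning_trees n|)) (exp (- (ln (1 + eps * eps) * INR k)))).
rewrite exp_Ropp Rmult_comm.
change (exp (INR k * ln (1 + eps * eps))) with (Rpower (1 + eps * eps) (INR k)).
rewrite Rpower_pow; last by lra.
apply: real_part H _ _ _.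
- apply: subset_leq_card; apply/subsetP => T; rewrite inE => /andP[] //.
- lra.
- have := Rmult_le_compat_l eps _ _ (Rlt_le _ _ He) Hn; nra.
- case: (posnP k) => [->|kp]; [left|right] => //.
  exact: leq_trans kp (leq_trans (leq_addr m k) km).
Qed.
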